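(* Let $n\ge2$, let $A\subseteq\mathfrak{S}_n$ be Schur-positive and $\mathrm{cDes}$-invariant, and let $(m_\lambda)_{\lambda\vdash n}$ be nonnegative integers such that $\sum_{\pi\in A}\mathbf{x}^{\mathrm{Des}(\pi)}=\sum_{\lambda\vdash n}m_\lambda\sum_{T\in\mathrm{SYT}(\lambda)}\mathbf{x}^{\mathrm{Des}(T)}$. Then for every $0\le k<n$ the alternating sum $\sum_{i=k}^{n-1}(-1)^{k-i}m_{(n-i,1^i)}$ is nonnegative, and it equals $0$ when $k=0$.
   Context: For $\pi\in\mathfrak{S}_n$ (one-line notation), $\mathrm{Des}(\pi)=\{i\in[n-1]:\pi(i)>\pi(i+1)\}$ and $\mathrm{cDes}(\pi)=\{i\in[n]:\pi(i)>\pi(i+1)\}$ with $\pi(n+1):=\pi(1)$. $\mathbf{x}^J=\prod_{i\in J}x_i$; $i+J=\{i+j\bmod n:j\in J\}\subseteq[n]$. $A$ is Schur-positive if $\sum_{\pi\in A}\mathcal{F}_{n,\mathrm{Des}(\pi)}$ is symmetric and Schur-nonnegative, where $\mathcal{F}_{n,D}=\sum x_{i_1}\cdots x_{i_n}$ over $i_1\le\cdots\le i_n$ with $i_j<i_{j+1}$ for $j\in D$. $A$ is $\mathrm{cDes}$-invariant if there is a bijection $\psi:A\to A$ with $\mathrm{cDes}(\psi\pi)=1+\mathrm{cDes}(\pi)$. For $T\in\mathrm{SYT}(\lambda)$, $\mathrm{Des}(T)$ is the set of $i\in[n-1]$ with $i+1$ in a strictly lower row than $i$; $(n-i,1^i)$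 denotes a hook partition. *)

(* Defs.v *)
From HB Require Import structures.
From mathcomp Require Import all_boot all_order all_algebra all_fingroup.
From mathcomp Require Import mpoly.
Set Implicit Arguments. Unset Strict Implicit. Unset Printing Implicit Defensive.
Import GRing.Theory.
Local Open Scope ring_scope.

(* Conventions: positions / variable indices of [n] = {1..n} are represented
   0-based by 'I_n (i : 'I_n stands for i+1).  ordS i is the cyclic successor
   (i.+1 mod n). *)

Definition Des n (p : 'S_n) : {set 'I_n} :=
  [set i : 'I_n | (i.+1 < n)%N && (p (ordS i) < p i)%N].

Definition cDes n (p : 'S_n) : {set 'I_n} :=
  [set i : 'I_n | (p (ordS i) < p i)%N].

Definition shift1 n (J : {set 'I_n}) : {set 'I_n} := [set ordS j | j in J].

Definition cDes_invariant n (A : {set 'S_n}) : Prop :=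
  exists psi : {perm 'S_n},
    [set psi p | p in A] = A /\
    {in A, forall p, cDes (psi p) = shift1 (cDes p)}.

Definition xmon n (J : {set 'I_n}) : {mpoly int[n]} := \prod_(i in J) 'X_i.

Definition is_partition (n : nat) (l : seq nat) : bool :=
  [&& sorted geq l, all (fun x => 0 < x)%N l & sumn l == n].

(* every partition of n has at most n parts, each at most n, hence arises by
   deleting the zeros of some n-tuple with entries in {0..n} *)
Definition partitions (n : nat) : seq (seq nat) :=
  undup [seq l <- [seq [seq x <- map val (tval t) | (0 < x)%N] | t : n.-tuple 'I_n.+1]
        | is_partition n l].

Definition hook (n i : nat) : seq nat := (n - i)%N :: nseq i 1%N.

(* the Young diagram of l (English convention, rows numbered from the top) *)
Definition in_diag (l : seq nat) (c : nat * nat) : bool := (c.2 < nth 0 l c.1)%N.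

(* Standard Young tableaux of shape l (a partition of n), encoded by the cell
   (row, column) occupied by each entry; entry k : 'I_n stands for k+1. *)
Definition is_SYT n (l : seq nat) (T : {ffun 'I_n -> 'I_n * 'I_n}) : bool :=
  [&& injectiveb T,
      [forall k, in_diag l ((T k).1 : nat, (T k).2 : nat)],
      [forall k, forall k', (((T k).1 == (T k').1) && ((T k).2 < (T k').2)%N) ==> (k < k')%N] &
      [forall k, forall k', (((T k).2 == (T k').2) && ((T k).1 < (T k').1)%N) ==> (k < k')%N]].

Definition DesT n (T : {ffun 'I_n -> 'I_n * 'I_n}) : {set 'I_n} :=
  [set i : 'I_n | (i.+1 < n)%N && ((T i).1 < (T (ordS i)).1)%N].

Definition fundQ (N n : nat) (D : {set 'I_n}) : {mpoly int[N]} :=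
  \sum_(f : {ffun 'I_n -> 'I_N} |
          [forall j : 'I_n, (j.+1 < n)%N ==>
              ((f j <= f (ordS j))%N && ((j \in D) ==> (f j < f (ordS j))%N))])
     \prod_(j : 'I_n) 'X_(f j).

Definition cells (n : nat) (l : seq nat) :=
  {c : 'I_n * 'I_n | in_diag l (c.1 : nat, c.2 : nat)}.

Definition is_SSYT N n (l : seq nat) (S : {ffun cells n l -> 'I_N}) : bool :=
  [forall a : cells n l, forall b : cells n l,
     ((((val a).1 == (val b).1) && ((val a).2 < (val b).2)%N) ==> (S a <= S b)%N) &&
     ((((val a).2 == (val b).2) && ((val a).1 < (val b).1)%N) ==> (S a < S b)%N)].

Definition schur (N n : nat) (l : seq nat) : {mpoly int[N]} :=
  \sum_(S : {ffun cells n l -> 'I_N} | is_SSYT S) \prod_(c : cells n l) 'X_(S c).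

(* A is Schur-positive: sum_{pi in A} F_{n,Des pi} is symmetric and
   Schur-nonnegative; checked on every finite number N of variables
   (equivalent to the statement for infinitely many variables). *)
Definition schur_positive n (A : {set 'S_n}) : Prop :=
  forall N : nat,
    let Q : {mpoly int[N]} := \sum_(p in A) fundQ N (Des p) in
    Q \is symmetric /\
    exists c : seq nat -> nat,
      Q = \sum_(l <- partitions n) (c l)%:R * schur N n l.

(* Main.v *)
Require Import Defs.
From HB Require Import structures.
From mathcomp Require Import all_boot all_order all_algebra all_fingroup.
From mathcomp Require Import mpoly.
From mathcomp Require Import zify.
Import GRing.Theory Num.Theory.

Lemma ordS_val n (i : 'I_n) : i.+1 < n -> val (ordS i) = i.+1.
Proof. by move=> h; rewrite /= modn_small. Qed.

Lemma sum_ind_le n a : \sum_(j < n) (if j < a then 1 else 0) = minn n a.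
Proof.
elim: n => [|n IH]; first by rewrite big_ord0 min0n.
rewrite big_ord_recr /= IH; case: ltnP => h; lia.
Qed.

Lemma sum_nth_le l n : \sum_(i < n) nth 0 l i <= sumn l.
Proof.
elim: l n => [|x s IH] n.
  by rewrite big1 // => i _; rewrite nth_nil.
case: n => [|n]; first by rewrite big_ord0.
rewrite big_ord_recl /=.
rewrite (eq_bigr (fun i : 'I_n => nth 0 s i)); last by [].
by rewrite leq_add2l IH.
Qed.

Lemma sumn_pos s : all (fun x => 0 < x) s -> size s <= sumn s.
Proof. elim: s => [|x s IH] //= /andP[h1 h2]; have := IH h2; lia. Qed.

Lemma sumn_pos_eq s : all (fun x => 0 < x) s -> sumn s <= size s -> s = nseq (size s) 1.
Proof.
elim: s => [|x s IH] //= /andP[h1 h2] h3.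
have h4 := @sumn_pos s h2.
have x1 : x = 1 by lia.
by rewrite x1 -IH //; lia.
Qed.

Lemma nth_hook n k r :
  nth 0 (hook n k) r = if r == 0 then n - k else (r <= k : nat).
Proof. by case: r => [|r] //=; rewrite nth_nseq; case: ltnP. Qed.

Lemma size_hook n k : size (hook n k) = k.+1.
Proof. by rewrite /= size_nseq. Qed.

Definition T0 N k : {ffun 'I_N.+1 -> 'I_N.+1 * 'I_N.+1} :=
  [ffun a : 'I_N.+1 => if (a <= k)%N then (a, ord0) else (ord0, inord (a - k))].

Lemma T0_1 N k (a : 'I_N.+1) : ((T0 N k a).1 : nat) = if a <= k then a : nat else 0.
Proof. by rewrite ffunE; case: ifP. Qed.

Lemma T0_2 N k (a : 'I_N.+1) : ((T0 N k a).2 : nat) = if a <= k then 0 else a - k.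
Proof.
rewrite ffunE; case: ifP => //= _; rewrite inordK //.
have := ltn_ord a; lia.
Qed.

Lemma T0_ok N k : k < N.+1 ->
  is_SYT (hook N.+1 k) (T0 N k) /\ DesT (T0 N k) = [set i : 'I_N.+1 | i < k].
Proof.
move=> Hk; split.
  apply/and4P; split.
  - apply/injectiveP => a b E.
    have E1 := congr1 (fun x => nat_of_ord x.1) E; have E2 := congr1 (fun x => nat_of_ord x.2) E.
    move: E1 E2 => /=; rewrite !T0_1 !T0_2 => E1 E2; apply: val_inj => /=.
    by move: E1 E2; case: (leqP a k); case: (leqP b k); lia.
  - apply/forallP => a; rewrite /in_diag /= T0_1 T0_2 nth_hook.
    have := ltn_ord a; case: (leqP a k) => h1 h2.
      case: eqP => h3; first lia. case: leqP; lia.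
    by rewrite eqxx; lia.
  - apply/forallP => a; apply/forallP => b; apply/implyP => /andP[/eqP E1 E2].
    move/(congr1 (@nat_of_ord _)): E1; move: E2; rewrite !T0_1 !T0_2.
    by case: (leqP a k); case: (leqP b k); lia.
  - apply/forallP => a; apply/forallP => b; apply/implyP => /andP[/eqP E1 E2].
    move/(congr1 (@nat_of_ord _)): E1; move: E2; rewrite !T0_1 !T0_2.
    by case: (leqP a k); case: (leqP b k); lia.
apply/setP => i; rewrite !inE.
case: (ltnP i.+1 N.+1) => h /=.
  rewrite !T0_1 ordS_val //.
  by case: (leqP i k); case: (leqP i.+1 k); lia.
have := ltn_ord i; lia.
Qed.

Section SYTDet.
Variables (N k : nat) (l : seq nat) (T : {ffun 'I_N.+1 -> 'I_N.+1 * 'I_N.+1}).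
Hypotheses (Hk : k < N.+1) (Hl : is_partition N.+1 l) (HT : is_SYT l T)
  (HD : DesT T = [set i : 'I_N.+1 | i < k]).

Let R j := ((T (inord j)).1 : nat).
Let C j := ((T (inord j)).2 : nat).

Let Tinj : injective T.
Proof. by case/and4P: HT => /injectiveP. Qed.

Let rowP (a b : 'I_N.+1) : (T a).1 = (T b).1 -> (T a).2 < (T b).2 -> a < b.
Proof.
case/and4P: HT => _ _ /forallP H _ E1 E2.
by have /forallP/(_ b)/implyP := H a; apply; rewrite E1 eqxx.
Qed.

Let colP (a b : 'I_N.+1) : (T a).2 = (T b).2 -> (T a).1 < (T b).1 -> a < b.
Proof.
case/and4P: HT => _ _ _ /forallP H E1 E2.
by have /forallP/(_ b)/implyP := H a; apply; rewrite E1 eqxx.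
Qed.

Let diag (a : 'I_N.+1) : (T a).2 < nth 0 l (T a).1.
Proof. by case/and4P: HT => _ /forallP H _ _; have := H a. Qed.

Let sizel r : 0 < nth 0 l r -> r < size l.
Proof. by case: (ltnP r (size l)) => // h; rewrite nth_default. Qed.

Let sortedl r r' : r <= r' -> r' < size l -> nth 0 l r' <= nth 0 l r.
Proof.
move=> h1 h2; move: Hl; rewrite /is_partition => /and3P[Hs _ _].
have tr : transitive geq by move=> x y z h3 h4; exact: leq_trans h4 h3.
have rf : reflexive geq by move=> x; exact: leqnn.
exact: (sorted_leq_nth tr rf 0 Hs) (leq_ltn_trans h1 h2) h2 h1.
Qed.

Let full (x : 'I_N.+1 * 'I_N.+1) : x.2 < nth 0 l x.1 -> exists a, T a = x.
Proof.
move=> hx.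
pose D := [set y : 'I_N.+1 * 'I_N.+1 | y.2 < nth 0 l y.1].
have sub : T @: setT \subset D.
  by apply/subsetP => y /imsetP[a _ ->]; rewrite inE diag.
have cD : #|D| <= N.+1.
  rewrite -sum1_card big_mkcond /=.
  rewrite (eq_bigr (fun p : 'I_N.+1 * 'I_N.+1 => (fun i j : 'I_N.+1 => if j < nth 0 l i then 1 else 0) p.1 p.2)); last by move=> p _; rewrite inE.
  rewrite -(pair_bigA _ (fun i j : 'I_N.+1 => if j < nth 0 l i then 1 else 0)) /=.
  apply: (@leq_trans (\sum_(i < N.+1) nth 0 l i)); last first.
    move: Hl; rewrite /is_partition => /and3P[_ _ /eqP <-]; exact: sum_nth_le.
  apply: leq_sum => i _.
  rewrite sum_ind_le; exact: geq_minr.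
have cI : #|T @: setT| = N.+1 by rewrite card_imset // cardsT card_ord.
have := subset_cardP _ sub.
have e : #|T @: setT| = #|D|.
  by apply/eqP; rewrite eqn_leq subset_leq_card // cI.
move/(_ e) => eqTD.
have : x \in T @: setT by rewrite eqTD inE.
by case/imsetP => a _ ->; exists a.
Qed.

Let ordS_inord j : j.+1 < N.+1 -> ordS (inord j : 'I_N.+1) = inord j.+1.
Proof.
move=> h; apply: val_inj => /=; rewrite inordK; last lia.
by rewrite modn_small // inordK.
Qed.

Let desc j : j.+1 < N.+1 -> (j < k) = (R j < R j.+1).
Proof.
move=> h.
have : (inord j : 'I_N.+1) \in DesT T = (inord j \in [set i : 'I_N.+1 | i < k]).
  by rewrite HD.
rewrite !inE inordK; last lia.
by rewrite h ordS_inord.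
Qed.

Let Rinc j i : j <= i -> i <= k -> R j + (i - j) <= R i.
Proof.
elim: i => [|i IH] h1 h2; first by move: h1; rewrite leqn0 => /eqP ->; rewrite subnn addn0.
case: (eqVneq j i.+1) => [->|ne]; first by rewrite subnn addn0.
have h3 : j <= i by lia.
have := IH h3 ltac:(lia).
have : R i < R i.+1 by rewrite -desc; lia.
lia.
Qed.

Let Cinc j : k <= j -> j.+1 < N.+1 -> C j < C j.+1.
Proof.
move=> h1 h2.
have Hr : R j.+1 <= R j.
  by rewrite leqNgt -desc //; lia.
rewrite ltnNge; apply/negP => Hc.
have ja : (inord j : 'I_N.+1) = j :> nat by rewrite inordK; lia.
have jb : (inord j.+1 : 'I_N.+1) = j.+1 :> nat by rewrite inordK; lia.
move: Hr Hc; rewrite /R /C.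
set a := (inord j : 'I_N.+1) in ja *; set b := (inord j.+1 : 'I_N.+1) in jb *.
move=> Hr Hc.
case: (ltngtP (T b).1 (T a).1) => hr; last first.
-
  have hc : (T b).2 != (T a).2.
    apply/negP => /eqP hc.
    have : T b = T a by rewrite [T b]surjective_pairing [T a]surjective_pairing hc; congr pair; apply: val_inj.
    move/Tinj/(congr1 (@nat_of_ord _)); rewrite ja jb; lia.
  have hc' : (T b).2 < (T a).2.
    by rewrite ltn_neqAle Hc andbT; move: hc; apply: contra => /eqP h; apply/eqP/val_inj.
  have := rowP b a (val_inj hr) hc'; rewrite ja jb; lia.
- lia.
- have hx : ((T b).1, (T a).2).2 < nth 0 l ((T b).1, (T a).2).1.
    rewrite /=; apply: (leq_trans (diag a)); apply: sortedl; first exact: ltnW.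
    apply: sizel; have := diag a; lia.
  have [e He] := full _ hx.
  have e1 : e < a by apply: colP; rewrite He //.
  have [hc|hc] : (T b).2 < (T a).2 \/ (T b).2 = (T a).2 :> nat by lia.
  + have := rowP b e; rewrite He /= => /(_ erefl hc); lia.
  + have : T e = T b.
      by rewrite He [T b]surjective_pairing; congr pair; apply: val_inj.
    move/Tinj => eb; move: e1; rewrite eb; lia.
Qed.

Let Cinc2 j i : k <= j -> j <= i -> i < N.+1 -> C j + (i - j) <= C i.
Proof.
move=> h0; elim: i => [|i IH] h1 h2; first by move: h1; rewrite leqn0 => /eqP ->; rewrite subnn addn0.
case: (eqVneq j i.+1) => [->|ne]; first by rewrite subnn addn0.
have := IH ltac:(lia) ltac:(lia).
have := Cinc i ltac:(lia) h2.
lia.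
Qed.

Let RC (a : 'I_N.+1) : T a = T (inord a).
Proof. by rewrite inord_val. Qed.

Lemma syt_shape : l = hook N.+1 k.
Proof.
have r1 : k <= R k by have := Rinc (0) (k) (leq0n _) (leqnn _); lia.
have r2 : R k < size l by apply: sizel; have := diag (inord k); rewrite /R; lia.
have c1 : N - k <= C N by have := Cinc2 (k) (N) (leqnn _) ltac:(lia) (ltnSn _); lia.
have c2 : C N < nth 0 l (R N) by exact: diag.
have r3 : R N < size l by apply: sizel; lia.
have s1 : nth 0 l (R N) <= nth 0 l 0 by apply: sortedl.
move: Hl; rewrite /is_partition => /and3P; case: l c2 r2 r3 s1 => [|x s] //= c2 r2 r3 s1 [_ /andP[hx hs] /eqP hsum].
have hs2 := @sumn_pos s hs.
have ex : x = N.+1 - k by lia.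
have es : sumn s <= size s by lia.
rewrite (@sumn_pos_eq s hs es) ex; congr (_ :: nseq _ _); lia.
Qed.

Lemma syt_T0 : T = T0 N k.
Proof.
have lh := syt_shape.
have nl r : nth 0 l r = if r == 0 then N.+1 - k else (r <= k : nat) by rewrite lh nth_hook.
have Rlt j : R j < k.+1.
  by rewrite -(size_hook N.+1 k) -lh; apply: sizel; have := diag (inord j); rewrite /R; lia.
have Rj j : j <= k -> R j = j.
  move=> h; have := Rinc (0) (j) (leq0n _) h.
  have := Rinc (j) (k) h (leqnn _); have := Rlt k; lia.
have Cj j : k <= j -> j < N.+1 -> C j = j - k.
  move=> h1 h2; have := Cinc2 (k) (j) (leqnn _) h1 h2.
  have := Cinc2 (j) (N) h1 ltac:(lia) (ltnSn _).
  have : C N < nth 0 l (R N) by exact: diag.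
  rewrite nl; case: eqP => _; first lia.
  case: (leqP (R N) k) => _ /=; lia.
have Rj2 j : k < j -> j < N.+1 -> R j = 0.
  move=> h1 h2; have := Cj j ltac:(lia) h2.
  have : C j < nth 0 l (R j) by exact: diag.
  rewrite nl; case: eqP => // _; case: (leqP (R j) k) => _ /=; lia.
have Cj2 j : 0 < j -> j <= k -> C j = 0.
  move=> h1 h2; have : C j < nth 0 l (R j) by exact: diag.
  rewrite nl Rj //; case: eqP => e; first lia.
  rewrite h2 /=; lia.
have C0 : C 0 = 0.
  case: (posnP k) => hk; first by rewrite Cj ?hk.
  apply/eqP; rewrite -leqn0 leqNgt; apply/negP => hc.
  have : C 0 < nth 0 l (R 0) by exact: diag.
  rewrite nl Rj // eqxx => hc2.
  have ee : T (inord (k + C 0)) = T (inord 0).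
    rewrite [LHS]surjective_pairing [RHS]surjective_pairing.
    congr pair; apply: val_inj => /=.
      by have := Rj2 (k + C 0) ltac:(lia) ltac:(lia); rewrite /R => ->; have := Rj 0 (leq0n _); rewrite /R => ->.
    have := Cj (k + C 0) ltac:(lia) ltac:(lia); rewrite /C => ->; rewrite /C in hc2 *; lia.
  move/Tinj/(congr1 (@nat_of_ord _)): ee; rewrite !inordK; lia.
apply/ffunP => a; rewrite (RC a) [T (inord a)]surjective_pairing.
rewrite [T0 N k a]surjective_pairing; congr pair; apply: val_inj.
  rewrite /= T0_1 -/(R a); case: leqP => h; first by rewrite Rj.
  by rewrite Rj2.
rewrite /= T0_2 -/(C a); case: leqP => h.
  by case: (posnP a) => ha; [rewrite ha C0 | rewrite Cj2].
by rewrite Cj //; lia.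
Qed.

End SYTDet.

Lemma cnt N k l : k < N.+1 -> is_partition N.+1 l ->
  \sum_(T : {ffun 'I_N.+1 -> 'I_N.+1 * 'I_N.+1} | is_SYT l T)
     (DesT T == [set i : 'I_N.+1 | i < k] : nat) = (l == hook N.+1 k).
Proof.
move=> Hk; case: eqVneq => [->|ne] Hl.
  have [h1 h2] := @T0_ok N k Hk.
  rewrite big_mkcond /= (bigD1 (T0 N k)) //= h1 h2 eqxx big1 // => T /negbTE nT.
  case: ifP => // hs; case: eqP => // hd.
  by move: nT; rewrite (@syt_T0 N k _ T Hk Hl hs hd) eqxx.
apply: big1 => T hs; case: eqP => // hd.
by move: ne; rewrite (@syt_shape N k _ T Hk Hl hs hd) eqxx.
Qed.

Lemma filter_nth_iota (s : seq nat) n : all (fun x => 0 < x) s -> size s <= n ->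
  [seq x <- map (nth 0 s) (iota 0 n) | 0 < x] = s.
Proof.
move=> hs hn.
rewrite -(subnKC hn) iotaD map_cat filter_cat add0n.
have -> : map (nth 0 s) (iota 0 (size s)) = s by exact: mkseq_nth.
rewrite (all_filterP hs).
have -> : [seq x <- map (nth 0 s) (iota (size s) (n - size s)) | 0 < x] = [::].
  apply/eqP; rewrite -[_ == _]negbK -has_filter; apply/hasPn => x /mapP[j hj ->].
  by rewrite nth_default //; move: hj; rewrite mem_iota => /andP[].
by rewrite cats0.
Qed.

Lemma hook_part N k : k < N.+1 -> is_partition N.+1 (hook N.+1 k).
Proof.
move=> hk; apply/and3P; split.
- rewrite /hook /=; case: k hk => [|k] hk //=; apply/andP; split; first lia.
  by elim: k {hk} => //= k ->; rewrite andbT.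
- by rewrite /= all_nseq /=; apply/andP; split; [lia | rewrite orbT].
- by rewrite /= sumn_nseq; apply/eqP; lia.
Qed.

Lemma hook_mem N k : k < N.+1 -> hook N.+1 k \in partitions N.+1.
Proof.
move=> hk; rewrite /partitions mem_undup mem_filter (@hook_part N k hk) /=.
pose h := hook N.+1 k.
pose t := [tuple (inord (nth 0 h i) : 'I_N.+2) | i < N.+1].
have -> : hook N.+1 k = [seq x <- map val (tval t) | 0 < x].
  rewrite /t /= -map_comp.
  rewrite (eq_map (g := fun i : 'I_N.+1 => nth 0 h i)); last first.
    move=> i /=; rewrite inordK // ltnS.
    rewrite /h nth_hook; case: eqP => _; first lia.
    by case: (leqP i k).
  rewrite map_comp val_enum_ord filter_nth_iota //.
    by case/and3P: (@hook_part N k hk).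
  by rewrite size_hook.
apply/mapP; exists t => //; by rewrite mem_enum.
Qed.

Definition mS n (J : {set 'I_n}) : 'X_{1..n} := \big[@mnm_add n/@mnm0 n]_(i in J) (U_(i))%MM.
Arguments mS {n} J.

Lemma mS_inj n (J K : {set 'I_n}) : (mS J == mS K) = (J == K).
Proof.
apply/eqP/eqP => [E|->] //; apply/setP => i.
have := congr1 (fun m : 'X_{1..n} => m i) E; rewrite /mS !mnm_sumE.
have F (X : {set 'I_n}) : \sum_(x in X) U_(x)%MM i = (i \in X).
  case: (boolP (i \in X)) => hi.
    rewrite (bigD1 i) //= mnm1E eqxx big1 // => x /andP[_ /negbTE].
    by rewrite mnm1E => ->.
  rewrite big1 // => x hx; rewrite mnm1E; case: eqP => // e.
  by move: hi; rewrite -e hx.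
by rewrite !F; case: (i \in J); case: (i \in K).
Qed.

Lemma coeff_xmon n (J K : {set 'I_n}) : ((xmon J)@_(mS K))%R = ((J == K)%:R : int)%R.
Proof. by rewrite /xmon mprodXE mcoeffX mS_inj. Qed.

Lemma Des_cDes N (p : 'S_N.+1) : Des p = cDes p :\ ord_max.
Proof.
apply/setP => i; rewrite !inE; congr andb.
have := ltn_ord i; rewrite -val_eqE /=; lia.
Qed.

Lemma cDes_ne0 N (p : 'S_N.+1) : 0 < N -> cDes p != set0.
Proof.
move=> hN; apply/set0Pn.
set i := (p^-1)%g ord_max; exists i.
have pi : p i = ord_max by rewrite /i permKV.
have ne : ordS i != i.
  rewrite -val_eqE /=; case: (ltnP i.+1 N.+1) => h.
    by rewrite modn_small //; lia.
  have ei : (i : nat) = N by have := ltn_ord i; lia.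
  by rewrite ei modnn; lia.
rewrite inE pi /=.
have : p (ordS i) != p i by rewrite (inj_eq perm_inj).
rewrite pi -val_eqE /= => h; have := ltn_ord (p (ordS i)); lia.
Qed.

Lemma cDes_neT N (p : 'S_N.+1) : cDes p != setT.
Proof.
apply/eqP => E.
set i := (p^-1)%g ord0.
have : i \in cDes p by rewrite E inE.
by rewrite inE /i permKV.
Qed.

Lemma setD1_eq (T : finType) (C K : {set T}) x : x \notin K ->
  (C :\ x == K) = (C == K) || (C == x |: K).
Proof.
move=> xK; case: (boolP (x \in C)) => xC.
  have -> : (C == K) = false by apply/negbTE; apply: contraNneq xK => <-.
  apply/eqP/eqP => [<-|->]; first by rewrite setD1K.
  by rewrite setU1K.
have -> : C :\ x = C.
  by apply/setP => y; rewrite !inE; case: eqVneq => // ->; rewrite (negbTE xC).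
have -> : (C == x |: K) = false.
  by apply/negbTE; apply: contraNneq xC => ->; rewrite setU11.
by rewrite orbF.
Qed.

Lemma shiftK N k : k < N.+1 ->
  shift1 (ord_max |: [set i : 'I_N.+1 | i < k]) = [set i : 'I_N.+1 | i < k.+1].
Proof.
move=> hk; apply/setP => x; rewrite inE; apply/imsetP/idP.
  case=> y; rewrite !inE => /orP[/eqP ->| hy] ->.
    by rewrite /= modnn.
  by rewrite ordS_val //; lia.
move=> hx; case: (posnP x) => x0.
  exists ord_max; first by rewrite !inE eqxx.
  by apply: val_inj; rewrite /= modnn x0.
exists (inord x.-1).
  rewrite !inE inordK; last lia.
  by apply/orP; right; lia.
apply: val_inj => /=; rewrite inordK ?modn_small; have := ltn_ord x; lia.
Qed.

Lemma alt_sum (b : nat -> int) n : b n = 0%R -> forall k, k <= n ->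
  (\sum_(k <= i < n) (-1) ^+ (i - k) * (b i + b i.+1))%R = b k.
Proof.
move=> bn k hk; have [j ->] : exists j, k = n - j by exists (n - k); lia.
elim: j => [|j IH].
  by rewrite subn0 big_geq // bn.
case: (leqP n j) => hj.
  have -> : n - j.+1 = n - j by lia.
  exact: IH.
rewrite big_ltn; last lia.
have -> : (n - j.+1).+1 = n - j by lia.
rewrite subnn expr0 mul1r.
rewrite (eq_big_nat _ _ (F2 := fun i => - ((-1) ^+ (i - (n - j)) * (b i + b i.+1)))%R); last first.
  move=> i hi; have -> : i - (n - j.+1) = (i - (n - j)).+1 by lia.
  by rewrite exprS mulN1r mulNr.
by rewrite sumrN IH addrK.
Qed.

Local Open Scope ring_scope.

Theorem lemma3p8 (n : nat) (A : {set 'S_n}) (m : seq nat -> nat) :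
  (2 <= n)%N ->
  schur_positive A ->
  cDes_invariant A ->
  \sum_(p in A) xmon (Des p) =
    \sum_(l <- partitions n) (m l)%:R *
       \sum_(T : {ffun 'I_n -> 'I_n * 'I_n} | is_SYT l T) xmon (DesT T) ->
  (forall k : nat, (k < n)%N ->
     0 <= \sum_(k <= i < n) (-1) ^+ (i - k) * ((m (hook n i))%:R : int)) /\
  \sum_(0 <= i < n) (-1) ^+ i * ((m (hook n i))%:R : int) = 0.
Proof.
move: A m; case: n => [|N] A m H2; first by [].
move=> _ [psi [HpsiA Hpsi]] Heq.
have N1 : (0 < N)%N by [].
pose K k := [set i : 'I_N.+1 | (i < k)%N].
pose b k := (\sum_(p in A) (cDes p == K k : nat))%N.
have rot J : (\sum_(p in A) (cDes p == shift1 J : nat))%N = (\sum_(p in A) (cDes p == J : nat))%N.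
  rewrite -{1}HpsiA big_imset /=; last by move=> x y _ _; apply: perm_inj.
  apply: eq_bigr => p hp; rewrite Hpsi //.
  by rewrite (inj_eq (imset_inj (@ordS_inj N.+1))).
have b0 : b 0%N = 0%N.
  apply: big1 => p _; have -> : K 0%N = set0 by apply/setP => i; rewrite !inE.
  by rewrite (negbTE (@cDes_ne0 N p N1)).
have bn : b N.+1 = 0%N.
  apply: big1 => p _; have -> : K N.+1 = setT by apply/setP => i; rewrite !inE ltn_ord.
  by rewrite (negbTE (@cDes_neT N p)).
have hm k : (k < N.+1)%N -> m (hook N.+1 k) = (b k + b k.+1)%N.
  move=> hk.
  have dE : (\sum_(p in A) (Des p == K k : nat))%N = (b k + b k.+1)%N.
    have sK : shift1 (ord_max |: K k) = K k.+1 := @shiftK N k hk.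
    rewrite /b -sK rot -big_split /=; apply: eq_bigr => p _.
    rewrite Des_cDes setD1_eq; last by rewrite inE /= ltnNge -ltnS hk.
    case: eqP => [->|_]; last by [].
    have -> : (K k == ord_max |: K k) = false.
      apply/negbTE; apply/eqP => /setP/(_ ord_max); rewrite !inE eqxx /= => /esym.
      by rewrite ltnNge -ltnS hk.
    by [].
  rewrite -dE.
  have := congr1 (mcoeff (mS (K k))) Heq.
  rewrite !raddf_sum /=.
  rewrite (eq_bigr (fun p => ((Des p == K k : nat))%:R)); last by move=> p _; rewrite coeff_xmon.
  rewrite (eq_bigr (fun l => ((\sum_(T : {ffun 'I_N.+1 -> 'I_N.+1 * 'I_N.+1} | is_SYT l T)
        (DesT T == K k : nat)) * m l)%N%:R)); last first.
    move=> l _; rewrite mulr_natl mcoeffMn raddf_sum /=.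
    rewrite (eq_bigr (fun T => ((DesT T == K k : nat))%:R)); last by move=> T _; rewrite coeff_xmon.
    by rewrite natrM mulr_natr natr_sum.
  rewrite -!natr_sum => /eqP; rewrite eqr_nat => /eqP ->.
  rewrite (eq_big_seq (fun l => ((l == hook N.+1 k) * m l)%N)); last first.
    move=> l hl; rewrite cnt //.
    by move: hl; rewrite /partitions mem_undup mem_filter => /andP[].
  rewrite (big_rem (hook N.+1 k)) /=; last exact: (@hook_mem N k hk).
  rewrite eqxx mul1n big1_seq ?addn0 // => l /andP[_ hl].
  case: eqP hl => [->|]; last by [].
  by rewrite mem_rem_uniqF // undup_uniq.
pose bz (i : nat) : int := (b i)%:R.
have key k : (k <= N.+1)%N ->
    \sum_(k <= i < N.+1) (-1) ^+ (i - k) * ((m (hook N.+1 i))%:R : int) = bz k.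
  move=> hk; rewrite -(@alt_sum bz N.+1 _ k hk); last by rewrite /bz bn.
  apply: eq_big_nat => i /andP[_ hi]; by rewrite hm // natrD.
split.
  by move=> k hk; rewrite key ?(ltnW hk) // /bz ler0n.
have := key 0%N (leq0n _); rewrite /bz b0 mulr0n => E.
apply: etrans E; by apply: eq_big_nat => i _; rewrite subn0.
Qed.
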